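(* Let $\rho:\,]0,+\infty[\,\to\,]0,+\infty[$ be a continuous function (the equation of state $\rho=\rho(P)$, so that $\rho(P)>0$ for $P>0$). Let $R>0$ and $M>0$ satisfy $1-\frac{2M}{R}>0$. Suppose $(m,P)$ is a $C^1$ solution on $]0,R[$ of the Tolman–Oppenheimer–Volkoff system $$\frac{dm}{dr}=4\pi r^2\rho,\qquad \frac{dP}{dr}=-(\rho+P)\,\frac{m+4\pi r^3\rho}{r^2\left(1-\frac{2m}{r}\right)},\qquad \rho=\rho(P(r)),$$ such that for every $r\in\,]0,R[$ the point $(r,m(r),P(r))$ lies in the domain $$\mathsf{D}=\Big\{\,0<r,\ 0<P,\ 0<m+4\pi r^3\rho(P),\ 0<1-\tfrac{2m}{r}\,\Big\},$$ and such that $m(r)\to M$ and $P(r)\to 0$ as $r\to R-0$. Assume moreover that $P(r)$ converges to a finite limit $P_{\mathsf{O}}<\infty$ as $r\to +0$. Then $m(r)\to 0$ as $r\to+0$, and $$m(r)=\int_0^r 4\pi\rho(P(r'))\,(r')^2\,dr'\qquad\text{for all } 0<r<R.$$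
   Context: Geometrical units are used, i.e. the gravitational constant and the speed of light are set equal to $1$. The system is the static spherically symmetric Einstein–Euler (Tolman–Oppenheimer–Volkoff) system for a perfect fluid with pressure $P$, density $\rho=\rho(P)$ and mass function $m(r)$; the data $(m,P)=(M,0)$ at $r=R$ correspond to matching with the exterior Schwarzschild metric of mass $M$ on the sphere $r=R$. *)

(* Defs.v *)
From Stdlib Require Import Reals.
From Coquelicot Require Export Coquelicot.
Export Reals.
Open Scope R_scope.

Definition tov_dP (rho : R -> R) (r m p : R) : R :=
  - (rho p + p) * (m + 4 * PI * r ^ 3 * rho p) / (r ^ 2 * (1 - 2 * m / r)).

Definition in_domain_D (rho : R -> R) (r m p : R) : Prop :=
  0 < r /\ 0 < p /\ 0 < m + 4 * PI * r ^ 3 * rho p /\ 0 < 1 - 2 * m / r.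

(* Main.v *)
Require Import Defs.
From Stdlib Require Import Reals Lra.
From Coquelicot Require Import Coquelicot.
Open Scope R_scope.

Lemma tov_neg rho r m p : 0 < rho p -> in_domain_D rho r m p -> tov_dP rho r m p < 0.
Proof.
  intros Hrp [Hr [Hp [HB HD]]] .
  unfold tov_dP.
  assert (Hpos: 0 < rho p + p) by lra.
  assert (HC : 0 < r ^ 2 * (1 - 2 * m / r)) by (apply Rmult_lt_0_compat; [apply pow_lt|]; lra).
  unfold Rdiv. rewrite Ropp_mult_distr_l_reverse, Ropp_mult_distr_l_reverse.
  apply Ropp_lt_gt_0_contravar.
  apply Rmult_lt_0_compat; [apply Rmult_lt_0_compat|apply Rinv_0_lt_compat]; assumption.
Qed.

Lemma right_le_loc : filter_le (at_right 0) (locally 0).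
Proof. intros Q [eps H]. exists eps. intros y Hy _. apply H; exact Hy. Qed.

Lemma lin_lim (c : R) : filterlim (fun x => c * x) (at_right 0) (locally 0).
Proof.
  apply (filterlim_filter_le_1 (F := locally 0)); [apply right_le_loc|].
  replace 0 with (c * 0) at 2 by ring.
  apply (ex_derive_continuous (fun x : R => c * x)). auto_derive. exact I.
Qed.

Lemma at_right_interval (a : R) : 0 < a -> at_right 0 (fun r => 0 < r < a).
Proof.
  intros Ha. exists (mkposreal a Ha). intros y Hy Hy0.
  unfold ball in Hy; simpl in Hy; unfold AbsRing_ball, abs, minus, plus, opp in Hy; simpl in Hy.
  split; auto. change (Rabs (y + - 0) < a) in Hy. rewrite Ropp_0, Rplus_0_r in Hy. apply Rabs_def2 in Hy. lra.
Qed.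

Theorem mainTheorem1
  (rho : R -> R)
  (Hrho_pos : forall p, 0 < p -> 0 < rho p)
  (Hrho_cont : forall p, 0 < p -> continuous rho p)
  (Rad M : R) (HR : 0 < Rad) (HM : 0 < M) (HRM : 0 < 1 - 2 * M / Rad)
  (m P : R -> R)
  (Hm_der : forall r, 0 < r < Rad -> is_derive m r (4 * PI * r ^ 2 * rho (P r)))
  (HP_der : forall r, 0 < r < Rad -> is_derive P r (tov_dP rho r (m r) (P r)))
  (Hm_C1 : forall r, 0 < r < Rad -> continuous (Derive m) r)
  (HP_C1 : forall r, 0 < r < Rad -> continuous (Derive P) r)
  (Hdom : forall r, 0 < r < Rad -> in_domain_D rho r (m r) (P r))
  (Hm_R : filterlim m (at_left Rad) (locally M))
  (HP_R : filterlim P (at_left Rad) (locally 0))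
  (HP_0 : exists PO : R, filterlim P (at_right 0) (locally PO)) :
  filterlim m (at_right 0) (locally 0) /\
  (forall r, 0 < r < Rad ->
     is_RInt_gen (fun s => 4 * PI * rho (P s) * s ^ 2) (at_right 0) (at_point r) (m r)).
Proof.
  destruct HP_0 as [PO HPO].
  assert (Hmono : forall a b, 0 < a -> a < b -> b < Rad -> P b <= P a).
  { intros a b Ha Hab Hb.
    destruct (MVT_gen P a b (fun x => tov_dP rho x (m x) (P x))) as [c [Hc Heq]].
    - intros x Hx. rewrite Rmin_left, Rmax_right in Hx by lra. apply HP_der; lra.
    - intros x Hx. rewrite Rmin_left, Rmax_right in Hx by lra.
      apply continuity_pt_filterlim. apply (ex_derive_continuous (K:=R_AbsRing) (V:=R_NormedModule) P). eexists; apply HP_der; lra.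
    - rewrite Rmin_left, Rmax_right in Hc by lra.
      assert (Hd : tov_dP rho c (m c) (P c) < 0).
      { destruct (Hdom c ltac:(lra)) as [H1 [H2 H3]].
        apply tov_neg; [apply Hrho_pos; lra| apply Hdom; lra]. }
      nra. }
  assert (HPOpos : 0 < PO).
  { assert (Hle : Rbar_le (P (Rad/2)) PO).
    { apply (filterlim_le (F := at_right 0) (fun _ => P (Rad/2)) P).
      - apply filter_imp with (P := fun x => 0 < x < Rad/2); [|apply at_right_interval; lra].
        intros x Hx. apply Hmono; lra.
      - apply filterlim_const.
      - exact HPO. }
    simpl in Hle. destruct (Hdom (Rad/2) ltac:(lra)) as [_ [H2 _]]. lra. }
  assert (HrP : filterlim (fun x => rho (P x)) (at_right 0) (locally (rho PO))).
  { exact (filterlim_comp _ _ _ P rho _ _ _ HPO (Hrho_cont PO HPOpos)). }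
  set (K := rho PO + 1).
  assert (HK : at_right 0 (fun x => rho (P x) < K)).
  { apply (HrP (fun y => y < K)). exists (mkposreal 1 Rlt_0_1). intros y Hy.
    unfold ball in Hy; simpl in Hy; unfold AbsRing_ball, abs, minus, plus, opp in Hy; simpl in Hy.
    apply Rabs_def2 in Hy. unfold K. lra. }
  assert (Hm0 : filterlim m (at_right 0) (locally 0)).
  { change (filterlim m (at_right 0) (Rbar_locally (Finite 0))).
    apply filterlim_le_le with (f := fun x => (- (4 * PI * K)) * x) (h := fun x => (/2) * x).
    - apply filter_imp with (P := fun x => (0 < x < Rad /\ x < 1) /\ rho (P x) < K).
      2:{ apply filter_and; [apply filter_and|exact HK].
          apply at_right_interval; lra.
          apply filter_imp with (P := fun x => 0 < x < 1); [tauto|apply at_right_interval; lra]. }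
      intros x [[Hx Hx1] HKx].
      destruct (Hdom x Hx) as [_ [HPx [HB HD]]].
      assert (Hrx : 0 < rho (P x)) by (apply Hrho_pos; lra).
      assert (HPI := PI_RGT_0).
      split.
      + assert (H3 : x ^ 3 <= x) by (simpl; nra).
        assert (H4 : x ^ 3 * rho (P x) <= x * K) by nra.
        nra.
      + assert (Hq : 2 * m x / x * x = 2 * m x) by (field; lra).
        nra.
    - apply lin_lim.
    - apply lin_lim. }
  split.
  - exact Hm0.
  - intros r Hr.
    apply is_RInt_gen_ext with (f := Derive m).
    { exists (fun a => 0 < a < r) (fun b => b = r).
      - apply at_right_interval; lra.
      - reflexivity.
      - intros a b Ha Hb x Hx; simpl in Hx. subst b.
        rewrite Rmin_left in Hx by lra. rewrite Rmax_right in Hx by lra.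
        rewrite (is_derive_unique _ _ _ (Hm_der x ltac:(lra))). lazymatch goal with |- ?a = ?b => change (@eq R a b) end; ring. }
    replace (m r) with (m r - 0) by ring.
    apply is_RInt_gen_Derive.
    + exists (fun a => 0 < a < r) (fun b => b = r).
      * apply at_right_interval; lra.
      * reflexivity.
      * intros a b Ha Hb x Hx; simpl in Hx. subst b.
        rewrite Rmin_left in Hx by lra. rewrite Rmax_right in Hx by lra.
        eexists; apply Hm_der; lra.
    + exists (fun a => 0 < a < r) (fun b => b = r).
      * apply at_right_interval; lra.
      * reflexivity.
      * intros a b Ha Hb x Hx; simpl in Hx. subst b.
        rewrite Rmin_left in Hx by lra. rewrite Rmax_right in Hx by lra.
        apply Hm_C1; lra.
    + exact Hm0.
    + intros U HU. unfold filtermap, at_point. apply locally_singleton; exact HU.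
Qed.
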